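(* Let $\mathcal{M}\subseteq\mathbb{F}_{q^n}^{2\times2}$ be a matrix field isomorphic to $\mathbb{F}_{q^t}$, where $1\le t\le n$ and $t$ divides $n$. If $\mathcal{M}$ contains a nonsingular matrix, then there exist $P\in\mathrm{GL}(2,q^n)$ and $\sigma\in\mathrm{Aut}(\mathbb{F}_{q^t})$ such that \[P\mathcal{M}P^{-1}=\left\{\begin{pmatrix}x&0\\0&x^\sigma\end{pmatrix}\colon x\in\mathbb{F}_{q^t}\right\}.\] In addition, if $\mathrm{diag}(x,x)\in\mathcal{M}$ for every $x\in\mathbb{F}_q$, then $\sigma\in\mathrm{Gal}(\mathbb{F}_{q^t}|\mathbb{F}_q)$.
   Context: $q$ is a prime power and $n\ge1$. A matrix field in $\mathbb{F}_{q^n}^{2\times2}$ is a subset which is a field with respect to the matrix addition and multiplication inherited from $\mathbb{F}_{q^n}^{2\times2}$ (its identity element need not be the identity matrix). *)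

(* Defs.v *)
From HB Require Import structures.
From mathcomp Require Import all_boot all_order all_algebra.
Set Implicit Arguments. Unset Strict Implicit. Unset Printing Implicit Defensive.
Import GRing.Theory.
Local Open Scope ring_scope.

Definition prime_power (q : nat) : Prop :=
  exists p k : nat, prime p /\ (0 < k)%N /\ q = (p ^ k)%N.

(* The subfield F_{q^t} of a finite field L (containing it): {x | x^(q^t) = x}. *)
Definition subGF (L : finFieldType) (q t : nat) : {set L} :=
  [set x : L | x ^+ (q ^ t) == x].

(* A matrix field: a subset of 2x2 matrices that is a field for the inherited
   matrix addition and multiplication (identity need not be the identity matrix).
   The additive identity of an additive subgroup is necessarily the zero matrix. *)
Definition matrix_field (L : finFieldType) (S : {set 'M[L]_2}) : Prop :=
  [/\ [/\ 0 \in S,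
      {in S & S, forall A B, A + B \in S} &
      {in S, forall A, - A \in S}],
      {in S & S, forall A B, A * B \in S},
      {in S & S, forall A B, A * B = B * A} &
      (exists e, [/\ e \in S, e != 0,
        (forall A, A \in S -> e * A = A /\ A * e = A) &
        (forall A, A \in S -> A != 0 -> exists2 B, B \in S & A * B = e)])].

Definition field_iso_onto (L : finFieldType) (K : {set L}) (S : {set 'M[L]_2}) : Prop :=
  exists f : L -> 'M[L]_2,
    [/\ {in K & K, forall x y, f (x + y) = f x + f y},
        {in K & K, forall x y, f (x * y) = f x * f y},
        {in K & K, injective f} &
        f @: K = S].

Definition field_aut_on (L : finFieldType) (K : {set L}) (sigma : L -> L) : Prop :=
  [/\ [/\ {in K, forall x, sigma x \in K},
      {in K & K, injective sigma} &
      K \subset sigma @: K],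
      {in K & K, forall x y, sigma (x + y) = sigma x + sigma y} &
      {in K & K, forall x y, sigma (x * y) = sigma x * sigma y}].

Definition diag2 (L : finFieldType) (x y : L) : 'M[L]_2 :=
  \matrix_(i < 2, j < 2) (if i == j then (if (i : nat) == 0%N then x else y) else 0).

(* Main.v *)
Require Import Defs.
From HB Require Import structures.
From mathcomp Require Import all_boot all_order all_algebra all_field.
Import GRing.Theory.
Local Open Scope ring_scope.

Lemma subGF_nat (L : finFieldType) (q n t : nat) :
  prime_power q -> #|L| = (q ^ n)%N -> [pchar L].-nat (q ^ t)%N.
Proof.
move=> [p [k [pp [k0 ->]]]] cL.
have pc : p \in [pchar L] by apply: (@card_finPcharP _ p (k * n)) => //; rewrite expnM -cL.
rewrite -expnM (eq_pnat _ (pcharf_eq pc)) pnatX pnat_id //.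
Qed.

Section K.
Variables (L : finFieldType) (q t : nat).
Hypothesis hQ : [pchar L].-nat (q ^ t)%N.
Local Notation K := (subGF L q t).

Lemma inK x : (x \in K) = (x ^+ (q ^ t) == x).
Proof. by rewrite inE. Qed.

Lemma K0 : 0 \in K.
Proof.
have Qp : (0 < q ^ t)%N by case/andP: hQ.
by rewrite inK expr0n; case: (q ^ t)%N Qp.
Qed.
Lemma K1 : 1 \in K. Proof. by rewrite inK expr1n. Qed.
Lemma KD x y : x \in K -> y \in K -> x + y \in K.
Proof. by rewrite !inK => /eqP hx /eqP hy; rewrite exprDn_pchar // hx hy. Qed.
Lemma KN x : x \in K -> - x \in K.
Proof. by rewrite !inK => /eqP hx; rewrite exprNn_pchar // hx. Qed.
Lemma KM x y : x \in K -> y \in K -> x * y \in K.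
Proof. by rewrite !inK => /eqP hx /eqP hy; rewrite exprMn hx hy. Qed.
Lemma KV x : x \in K -> x^-1 \in K.
Proof. by rewrite !inK => /eqP hx; rewrite exprVn hx. Qed.
Lemma KX x m : x \in K -> x ^+ m \in K.
Proof. by rewrite !inK => /eqP hx; rewrite exprAC hx. Qed.

Lemma hom0 {R : zmodType} {h : L -> R} :
  {in K & K, forall x y, h (x + y) = h x + h y} -> h 0 = 0.
Proof.
move=> hD; have e := hD 0 0 K0 K0; rewrite addr0 in e.
by apply: (@addrI _ (h 0)); rewrite addr0 -e.
Qed.

Lemma homN {R : zmodType} {h : L -> R} :
  {in K & K, forall x y, h (x + y) = h x + h y} -> forall x, x \in K -> h (- x) = - h x.
Proof.
move=> hD x xK; apply/eqP; rewrite -addr_eq0 -hD ?KN // addNr.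
by rewrite (hom0 hD).
Qed.

Lemma homX {R : pzRingType} {h : L -> R} :
  {in K & K, forall x y, h (x * y) = h x * h y} ->
  forall x m, x \in K -> h (x ^+ m.+1) = h x ^+ m.+1.
Proof.
move=> hM x m xK; elim: m => [|m IH]; first by rewrite !expr1.
by rewrite exprS hM ?KX // IH -exprS.
Qed.

Lemma homK (h : L -> L) :
  {in K & K, forall x y, h (x * y) = h x * h y} -> forall x, x \in K -> h x \in K.
Proof.
move=> hM x xK; have Qp : (0 < q ^ t)%N by case/andP: hQ.
move: xK; rewrite !inK => /eqP xK.
by rewrite -(prednK Qp) -homX ?inK ?(prednK Qp) ?xK.
Qed.

Lemma hom_inj (h : L -> L) :
  {in K & K, forall x y, h (x + y) = h x + h y} ->
  {in K & K, forall x y, h (x * y) = h x * h y} -> h 1 = 1 ->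
  {in K &, injective h}.
Proof.
move=> hD hM h1 x y xK yK e.
have dK : x - y \in K by rewrite KD ?KN.
have h0 : h (x - y) = 0 by rewrite hD ?KN // homN // e subrr.
apply/eqP; rewrite -subr_eq0; apply/negP => /negP nz.
have := hM _ _ dK (KV _ dK); rewrite divff // h1 h0 mul0r => /eqP.
by rewrite oner_eq0.
Qed.

Lemma hom_onto (h : L -> L) :
  {in K & K, forall x y, h (x + y) = h x + h y} ->
  {in K & K, forall x y, h (x * y) = h x * h y} -> h 1 = 1 ->
  h @: K = K.
Proof.
move=> hD hM h1; apply/eqP; rewrite eqEcard card_in_imset ?leqnn ?andbT.
  by apply/subsetP => y /imsetP [x xK ->]; apply: homK.
exact: hom_inj.
Qed.

End K.
Arguments homX {L q t R h}.
Arguments homK {L q t} hQ {h}.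
Arguments hom_onto {L q t} hQ {h}.
Arguments hom_inj {L q t} hQ {h}.
Arguments KD {L q t} hQ {x y}.
Arguments KM {L q t x y}.
Arguments K1 {L q t}.
Lemma codiag {L : finFieldType} {S : {set 'M[L]_2}} :
  (forall A, A \in S -> A ^+ #|L| = A) ->
  {in S & S, forall A B, A * B = B * A} ->
  exists2 P : 'M[L]_2, P \in unitmx &
    forall A, A \in S -> is_diag_mx (P *m A *m invmx P).
Proof.
move=> HX HC.
have [] := (@codiagonalizableP _ _ (enum S)).1.
  split.
    by move=> A B; rewrite !mem_enum => hA hB; rewrite /comm_mx !mulmxE HC.
  move=> A; rewrite mem_enum => hA.
  apply/diagonalizableP; exists (enum L); first exact: enum_uniq.
  apply: mxminpoly_min.
  rewrite big_enum /= -finField_genPoly rmorphB /= rmorphXn /= horner_mx_X HX //.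
  by rewrite subrr.
move=> P Pu /allP H; exists P => // A hA.
have := H A; rewrite mem_enum /= => /(_ hA).
by rewrite /similar_to conjumx.
Qed.
Section Diag2.
Variable L : finFieldType.
Implicit Types a b c d : L.

Lemma diag2E a b (i j : 'I_2) :
  diag2 a b i j = if i == j then (if (i : nat) == 0%N then a else b) else 0.
Proof. by rewrite mxE. Qed.

Lemma diag2_00 a b : diag2 a b 0 0 = a. Proof. by rewrite mxE. Qed.
Lemma diag2_11 a b : diag2 a b 1 1 = b. Proof. by rewrite mxE. Qed.

Lemma diag2_inj a b c d : diag2 a b = diag2 c d -> a = c /\ b = d.
Proof.
move=> e; split; first by rewrite -(diag2_00 a b) e diag2_00.
by rewrite -(diag2_11 a b) e diag2_11.
Qed.

Lemma diag2M a b c d : diag2 a b *m diag2 c d = diag2 (a * c) (b * d).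
Proof.
apply/matrixP => i j; rewrite !mxE !big_ord_recr big_ord0 !mxE.
case: i => [[|[|i]] hi] //; case: j => [[|[|j]] hj] //=;
  by rewrite ?mulr0 ?mul0r ?addr0 ?add0r.
Qed.

Lemma diag2D a b c d : diag2 a b + diag2 c d = diag2 (a + c) (b + d).
Proof.
apply/matrixP => i j; rewrite !mxE.
case: i => [[|[|i]] hi] //; case: j => [[|[|j]] hj] //=; by rewrite addr0.
Qed.

Lemma diag2_1 : (1 : 'M[L]_2) = diag2 1 1.
Proof.
apply/matrixP => i j; rewrite !mxE.
by case: i => [[|[|i]] hi] //; case: j => [[|[|j]] hj].
Qed.

Lemma diag2_scalar a : (a%:M : 'M[L]_2) = diag2 a a.
Proof.
apply/matrixP => i j; rewrite !mxE.
by case: i => [[|[|i]] hi] //; case: j => [[|[|j]] hj].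
Qed.

Lemma diag2_is_diag (M : 'M[L]_2) : is_diag_mx M -> M = diag2 (M 0 0) (M 1 1).
Proof.
move/is_diag_mxP => H; apply/matrixP => i j; rewrite mxE.
case: i => [[|[|i]] hi] //; case: j => [[|[|j]] hj] //=;
  first [ by rewrite H | by congr (M _ _); apply: val_inj ].
Qed.
End Diag2.

Section Main.
Variables (L : finFieldType) (q t : nat).
Hypothesis hQ : [pchar L].-nat (q ^ t)%N.
Local Notation K := (subGF L q t).

Lemma main_aux (S : {set 'M[L]_2}) :
  matrix_field S ->
  field_iso_onto (subGF L q t) S ->
  (exists2 A, A \in S & A \in unitmx) ->
  exists P : 'M[L]_2, exists sigma : L -> L,
    [/\ P \in unitmx,
        field_aut_on (subGF L q t) sigma,
        [set P *m A *m invmx P | A in S] = [set diag2 x (sigma x) | x in subGF L q t] &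
        ((forall x : L, x ^+ q = x -> x%:M \in S) ->
          forall x : L, x \in subGF L q t -> x ^+ q = x -> sigma x = x)].
Proof.
move=> [_ _ HC _] [f [fD fM _ fS]] [A0 A0S A0u].
have fK x : x \in K -> f x \in S by move=> xK; rewrite -fS imset_f.
have SK A : A \in S -> exists2 x, x \in K & A = f x by rewrite -fS => /imsetP.
have f1 : f 1 = 1.
  have [a aK ea] := SK _ A0S.
  have e : f 1 *m f a = f a by rewrite mulmxE -fM ?K1 // mul1r.
  have fa_u : f a \in unitmx by rewrite -ea.
  by rewrite -[f 1]mulmx1 -(mulmxV fa_u) mulmxA e mulmxV.
have fX A : A \in S -> A ^+ #|L| = A.
  move=> /SK [x xK ->]; have cp : (0 < #|L|)%N by apply/card_gt0P; exists 0.
  by rewrite -(prednK cp) -(homX fM) // (prednK cp) expf_card.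
have [P Pu Pd] := codiag fX HC.
pose D x := P *m f x *m invmx P.
pose g1 := fun x => (D x 0 0 : L); pose g2 := fun x => (D x 1 1 : L).
have Dg x : x \in K -> D x = diag2 (g1 x) (g2 x).
  by move=> xK; apply: diag2_is_diag; apply: Pd; apply: fK.
have DM x y : x \in K -> y \in K -> D (x * y) = D x *m D y.
  by move=> xK yK; rewrite /D fM // -mulmxE !mulmxA (mulmxKV Pu).
have DD x y : x \in K -> y \in K -> D (x + y) = D x + D y.
  by move=> xK yK; rewrite /D fD // mulmxDr mulmxDl.
have D1 : D 1 = 1 by rewrite /D f1 mulmx1 mulmxV.
have g1M : {in K & K, forall x y, g1 (x * y) = g1 x * g1 y}.
  by move=> x y xK yK; have := DM x y xK yK; rewrite !Dg ?KM // diag2M => /diag2_inj [].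
have g2M : {in K & K, forall x y, g2 (x * y) = g2 x * g2 y}.
  by move=> x y xK yK; have := DM x y xK yK; rewrite !Dg ?KM // diag2M => /diag2_inj [].
have g1D : {in K & K, forall x y, g1 (x + y) = g1 x + g1 y}.
  by move=> x y xK yK; have := DD x y xK yK; rewrite !Dg ?(KD hQ) // diag2D => /diag2_inj [].
have g2D : {in K & K, forall x y, g2 (x + y) = g2 x + g2 y}.
  by move=> x y xK yK; have := DD x y xK yK; rewrite !Dg ?(KD hQ) // diag2D => /diag2_inj [].
have [g11 g21] : g1 1 = 1 /\ g2 1 = 1.
  by have := D1; rewrite Dg ?K1 // diag2_1 => /diag2_inj.
have g1on := hom_onto hQ g1D g1M g11.
have g2on := hom_onto hQ g2D g2M g21.
have g1inj := hom_inj hQ g1D g1M g11.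
have g2inj := hom_inj hQ g2D g2M g21.
have g1K x : x \in K -> g1 x \in K by move=> xK; have hh := homK hQ g1M _ xK; exact hh.
have g2K x : x \in K -> g2 x \in K by move=> xK; have hh := homK hQ g2M _ xK; exact hh.
pose ginv y := odflt 0 [pick x in K | g1 x == y].
have ginvP y : y \in K -> ginv y \in K /\ g1 (ginv y) = y.
  move=> yK; rewrite /ginv; case: pickP => [x /andP [xK /eqP]|none] //=.
  exfalso; move: yK; rewrite -g1on => /imsetP [x xK ex].
  by move: (none x); rewrite xK ex eqxx.
have ginvK x : x \in K -> ginv (g1 x) = x.
  move=> xK; have [h1 h2] := ginvP _ (g1K _ xK); exact: g1inj h1 xK h2.
pose sigma y := g2 (ginv y).
have EQ : [set P *m A *m invmx P | A in S] = [set diag2 x (sigma x) | x in K].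
  rewrite -fS -imset_comp; apply/setP => M; apply/imsetP/imsetP.
    case=> x xK ->; exists (g1 x); first exact: g1K.
    by change (D x = diag2 (g1 x) (sigma (g1 x))); rewrite Dg // /sigma ginvK.
  case=> y yK ->; have [a1 b1] := ginvP _ yK; exists (ginv y) => //.
  by change (diag2 y (sigma y) = D (ginv y)); rewrite Dg // /sigma b1.
exists P, sigma; split => //.
- split; first split.
  + by move=> y yK; rewrite /sigma; apply: g2K; exact: (ginvP _ yK).1.
  + move=> y1 y2 y1K y2K e.
    have [a1 b1] := ginvP _ y1K; have [a2 b2] := ginvP _ y2K.
    by rewrite -b1 -b2; congr g1; exact: g2inj e.
  + apply/subsetP => z zK; move: zK; rewrite -{1}g2on => /imsetP [x xK ->].
    apply/imsetP; exists (g1 x); first exact: g1K _ xK.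
    by rewrite /sigma ginvK.
  + move=> y1 y2 y1K y2K.
    have [a1 b1] := ginvP _ y1K; have [a2 b2] := ginvP _ y2K.
    by rewrite /sigma -{1}b1 -{1}b2 -g1D // ginvK ?(KD hQ) // g2D.
  + move=> y1 y2 y1K y2K.
    have [a1 b1] := ginvP _ y1K; have [a2 b2] := ginvP _ y2K.
    by rewrite /sigma -{1}b1 -{1}b2 -g1M // ginvK ?KM // g2M.
- move=> HS x xK xq.
  have : P *m x%:M *m invmx P \in [set P *m A *m invmx P | A in S].
    by apply: imset_f; apply: HS.
  rewrite EQ scalar_mxC -mulmxA mulmxV // mulmx1 diag2_scalar.
  by case/imsetP => y yK /diag2_inj [e1 e2]; move: e2; rewrite -e1 => <-.
Qed.
End Main.

Theorem theorem3p13 (q n t : nat) (L : finFieldType) (S : {set 'M[L]_2}) :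
  prime_power q -> (1 <= n)%N -> #|L| = (q ^ n)%N ->
  (1 <= t)%N -> (t <= n)%N -> (t %| n)%N ->
  matrix_field S ->
  field_iso_onto (subGF L q t) S ->
  (exists2 A, A \in S & A \in unitmx) ->
  exists P : 'M[L]_2, exists sigma : L -> L,
    [/\ P \in unitmx,
        field_aut_on (subGF L q t) sigma,
        [set P *m A *m invmx P | A in S] = [set diag2 x (sigma x) | x in subGF L q t] &
        ((forall x : L, x ^+ q = x -> x%:M \in S) ->
          forall x : L, x \in subGF L q t -> x ^+ q = x -> sigma x = x)].
Proof.
move=> hq _ cL _ _ _.
have hQ := subGF_nat _ _ _ t hq cL.
exact: (@main_aux L q t hQ S).
Qed.
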